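(* Assume (A1)–(A3) and (SH), and let $z_t$ be defined by $x_0:=x_1$, $z_t=x_t+\frac{\beta_{1,t}}{1-\beta_{1,t}}(x_t-x_{t-1})$. Then for every $t\ge1$, $\mathbb{E}[f(z_{t+1})-f(z_1)]\le T_1+T_2+T_3+T_4+T_5+T_6$, where $T_1=-\mathbb{E}\big[\sum_{i=1}^t\langle\nabla f(z_i),\frac{\beta_{1,i}}{1-\beta_{1,i}}(\frac{\alpha_i}{\sqrt{\hat v_i}}-\frac{\alpha_{i-1}}{\sqrt{\hat v_{i-1}}})\odot m_{i-1}\rangle\big]$, $T_2=-\mathbb{E}\big[\sum_{i=1}^t\alpha_i\langle\nabla f(z_i),g_i/\sqrt{\hat v_i}\rangle\big]$, $T_3=-\mathbb{E}\big[\sum_{i=1}^t\langle\nabla f(z_i),(\frac{\beta_{1,i+1}}{1-\beta_{1,i+1}}-\frac{\beta_{1,i}}{1-\beta_{1,i}})\alpha_im_i/\sqrt{\hat v_i}\rangle\big]$, $T_4=\mathbb{E}\big[\sum_{i=1}^t\frac32L\|(\frac{\beta_{1,i+1}}{1-\beta_{1,i+1}}-\frac{\beta_{1,i}}{1-\beta_{1,i}})\alpha_im_i/\sqrt{\hat v_i}\|^2\big]$, $T_5=\mathbb{E}\big[\sum_{i=1}^t\frac32L\|\frac{\beta_{1,i}}{1-\beta_{1,i}}(\frac{\alpha_i}{\sqrt{\hat v_i}}-\frac{\alpha_{i-1}}{\sqrt{\hat v_{i-1}}})\odot m_{i-1}\|^2\big]$, $T_6=\mathbb{E}\big[\sum_{i=1}^t\frac32L\|\alpha_ig_i/\sqrt{\hat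 v_i}\|^2\big]$.
   Context: Problem: minimize $f(x)=\mathbb{E}_\xi[f(x;\xi)]$ over $x\in\mathbb{R}^d$. All vector operations (division, square root, squaring) are coordinatewise, $\odot$ is the coordinatewise product, $\|\cdot\|$ is the Euclidean norm. Generalized Adam: given $x_1\in\mathbb{R}^d$, stepsizes $\alpha_t>0$, momentum parameters $\beta_{1,t}\in[0,1)$ and maps $h_t$, set $m_0=0$ and for $t=1,2,\dots$: $m_t=\beta_{1,t}m_{t-1}+(1-\beta_{1,t})g_t$; $\hat v_t=h_t(g_1,\dots,g_t)\in\mathbb{R}^d$ with strictly positive entries; $x_{t+1}=x_t-\alpha_t m_t/\sqrt{\hat v_t}$, where $g_t$ is a stochastic gradient evaluated at $x_t$. By convention $(\alpha_1/\sqrt{\hat v_1}-\alpha_0/\sqrt{\hat v_0})\odot m_0=0$ (the $i=1$ terms of $T_1$ and $T_5$ vanish). Assumptions: (A1) $f$ is differentiable, $\|\nabla f(x)-\nabla f(y)\|\le L\|x-y\|$ for all $x,y$, and $f$ attains its minimum at some $x^*$ with $f(x^* )>-\infty$. (A2) $\|\nabla f(x)\|\le H$ for all $x$ and $\|g_t\|\le H$ for all $t$ almost surely. (A3) $g_t=\nabla f(x_t)+\zeta_t$ where the noise $\zeta_t$ has zero mean conditionally on $g_1,\dots,g_{t-1}$. Expectations are over all randomness in $\{g_t\}$. Standing hypotheses (SH): $\beta_1\in[0,1)$ with $\beta_{1,t}\le\beta_1$ for all $t$, the sequence $\beta_{1,t}\in[0,1)$ is non-increasing, and there is $G>0$ with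 $\|\alpha_t m_t/\sqrt{\hat v_t}\|\le G$ for all $t$ almost surely. *)

(* Defs.v *)
From Stdlib Require Import Reals.
Open Scope R_scope.

(** Vectors of R^d are represented by functions nat -> R; only the
    coordinates j < d are ever used (sums, norms, inner products range over
    j < d).  All vector operations are coordinatewise. *)
Definition vec := nat -> R.

Fixpoint fsum (n : nat) (f : nat -> R) : R :=
  match n with
  | O => 0
  | S k => fsum k f + f k
  end.

Definition inner (d : nat) (u v : vec) : R := fsum d (fun j => u j * v j).
Definition norm (d : nat) (u : vec) : R := sqrt (inner d u u).

Definition vzero : vec := fun _ => 0.
Definition vadd (u v : vec) : vec := fun j => u j + v j.
Definition vsub (u v : vec) : vec := fun j => u j - v j.
Definition vscale (c : R) (u : vec) : vec := fun j => c * u j.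
Definition vmul (u v : vec) : vec := fun j => u j * v j.
Definition vdiv (u v : vec) : vec := fun j => u j / v j.
Definition vsqrt (u : vec) : vec := fun j => sqrt (u j).
Definition vconst (c : R) : vec := fun _ => c.

Definition on_Rd (d : nat) (f : vec -> R) : Prop :=
  forall x y : vec, (forall j, (j < d)%nat -> x j = y j) -> f x = f y.

Definition has_gradient (d : nat) (f : vec -> R) (gradf : vec -> vec) : Prop :=
  forall x : vec, forall eps : R, 0 < eps ->
    exists delta : R, 0 < delta /\
      forall y : vec, norm d (vsub y x) < delta ->
        Rabs (f y - f x - inner d (gradf x) (vsub y x)) <= eps * norm d (vsub y x).

(** Abstract expectation on a sample space Omega: a normalized, positive,
    linear functional on a vector space of integrable random variables. *)
Record expectation (Omega : Type) := {
  integrable : (Omega -> R) -> Prop;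
  E : (Omega -> R) -> R;
  integrable_const : forall c, integrable (fun _ => c);
  integrable_plus : forall X Y, integrable X -> integrable Y ->
      integrable (fun w => X w + Y w);
  integrable_scal : forall c X, integrable X -> integrable (fun w => c * X w);
  E_const : forall c, E (fun _ => c) = c;
  E_plus : forall X Y, integrable X -> integrable Y ->
      E (fun w => X w + Y w) = E X + E Y;
  E_scal : forall c X, integrable X -> E (fun w => c * X w) = c * E X;
  E_mono : forall X Y, integrable X -> integrable Y ->
      (forall w, X w <= Y w) -> E X <= E Y
}.
Arguments integrable {Omega}.
Arguments E {Omega}.

Section Adam.
Variable Omega : Type.
Variable alpha : nat -> R.
Variable beta : nat -> R.
Variable g : nat -> Omega -> vec.
Variable h : nat -> (nat -> vec) -> vec.
Variable x1 : vec.

Definition vhat (t : nat) (w : Omega) : vec := h t (fun i => g i w).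

Fixpoint mom (t : nat) (w : Omega) : vec :=
  match t with
  | O => vzero
  | S k => fun j => beta (S k) * mom k w j + (1 - beta (S k)) * g (S k) w j
  end.

Definition eta (t : nat) (w : Omega) : vec :=
  vdiv (vconst (alpha t)) (vsqrt (vhat t w)).

Definition step (t : nat) (w : Omega) : vec := vmul (eta t w) (mom t w).

(** xseq k = x_{k+1}: x_1 given, x_{t+1} = x_t - alpha_t m_t / sqrt(hat v_t) *)
Fixpoint xseq (k : nat) (w : Omega) : vec :=
  match k with
  | O => x1
  | S k' => vsub (xseq k' w) (step (S k') w)
  end.

Definition xit (t : nat) (w : Omega) : vec :=
  match t with
  | O => x1
  | S k => xseq k w
  end.

Definition ratio (t : nat) : R := beta t / (1 - beta t).

Definition zit (t : nat) (w : Omega) : vec :=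
  vadd (xit t w) (vscale (ratio t) (vsub (xit t w) (xit (t - 1) w))).

(** beta_{1,i}/(1-beta_{1,i}) (alpha_i/sqrt(hat v_i) - alpha_{i-1}/sqrt(hat v_{i-1})) odot m_{i-1};
    for i = 1 this vanishes since m_0 = 0. *)
Definition vecA (i : nat) (w : Omega) : vec :=
  vscale (ratio i) (vmul (vsub (eta i w) (eta (i - 1) w)) (mom (i - 1) w)).

Definition vecB (i : nat) (w : Omega) : vec :=
  vscale (ratio (S i) - ratio i) (step i w).

Definition vecC (i : nat) (w : Omega) : vec := vmul (eta i w) (g i w).

Definition T1_rv (d : nat) (gradf : vec -> vec) (t : nat) (w : Omega) : R :=
  - fsum t (fun k => inner d (gradf (zit (S k) w)) (vecA (S k) w)).
Definition T2_rv (d : nat) (gradf : vec -> vec) (t : nat) (w : Omega) : R :=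
  - fsum t (fun k => alpha (S k) *
        inner d (gradf (zit (S k) w)) (vdiv (g (S k) w) (vsqrt (vhat (S k) w)))).
Definition T3_rv (d : nat) (gradf : vec -> vec) (t : nat) (w : Omega) : R :=
  - fsum t (fun k => inner d (gradf (zit (S k) w)) (vecB (S k) w)).
Definition T4_rv (d : nat) (L : R) (t : nat) (w : Omega) : R :=
  fsum t (fun k => 3 / 2 * L * (norm d (vecB (S k) w)) ^ 2).
Definition T5_rv (d : nat) (L : R) (t : nat) (w : Omega) : R :=
  fsum t (fun k => 3 / 2 * L * (norm d (vecA (S k) w)) ^ 2).
Definition T6_rv (d : nat) (L : R) (t : nat) (w : Omega) : R :=
  fsum t (fun k => 3 / 2 * L * (norm d (vecC (S k) w)) ^ 2).

End Adam.

(* Main.v *)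
Require Import Defs.
From Stdlib Require Import Reals Lra Lia FunctionalExtensionality.
From Coquelicot Require Import Coquelicot.
Import Defs.
Open Scope R_scope.
Lemma fsum_ext n f g : (forall j, (j < n)%nat -> f j = g j) -> fsum n f = fsum n g.
Proof. induction n; simpl; intros H; auto. rewrite IHn by (intros; apply H; lia). rewrite H by lia. auto. Qed.
Lemma fsum_plus n f g : fsum n (fun j => f j + g j) = fsum n f + fsum n g.
Proof. induction n; simpl; [lra|]. rewrite IHn; lra. Qed.
Lemma fsum_scal n c f : fsum n (fun j => c * f j) = c * fsum n f.
Proof. induction n; simpl; [lra|]. rewrite IHn; lra. Qed.
Lemma fsum_le n f g : (forall j, (j < n)%nat -> f j <= g j) -> fsum n f <= fsum n g.
Proof. induction n; simpl; intros H; [lra|]. assert (f n <= g n) by (apply H; lia).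
 assert (fsum n f <= fsum n g) by (apply IHn; intros; apply H; lia). lra. Qed.
Lemma inner_self_nonneg d u : 0 <= inner d u u.
Proof. unfold inner. replace 0 with (fsum d (fun _ => 0)).
 apply fsum_le; intros; nra. clear; induction d; simpl; lra. Qed.
Lemma norm_sq d u : norm d u ^ 2 = inner d u u.
Proof. unfold norm. simpl. rewrite Rmult_1_r. apply sqrt_sqrt, inner_self_nonneg. Qed.
Lemma norm_nonneg d u : 0 <= norm d u.
Proof. apply sqrt_pos. Qed.

Lemma disc A B C : 0 <= C -> (forall l, 0 <= A - 2*l*B + l*l*C) -> B*B <= A*C.
Proof. intros HC H. destruct (Req_dec C 0) as [E0|E0].
 - subst. destruct (Req_dec B 0) as [->|HB]; [nra|].
   specialize (H ((A+1)/(2*B))). exfalso. assert (2*((A+1)/(2*B))*B = A+1) by (field; auto). nra.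
 - specialize (H (B/C)). assert (0 < C) by lra.
   assert (2*(B/C)*B = 2*(B*B)/C) by (field; lra). assert (B/C*(B/C)*C = B*B/C) by (field; lra).
   assert (0 <= A - B*B/C) by lra.
   assert (0 <= (A - B*B/C)*C) by nra. replace ((A - B*B/C)*C) with (A*C - B*B) in H4 by (field; lra). lra. Qed.

Lemma CS d u v : inner d u v <= norm d u * norm d v.
Proof.
 assert (H : inner d u v * inner d u v <= inner d u u * inner d v v).
 { apply disc. apply inner_self_nonneg. intros l.
   assert (E : inner d u u - 2*l*inner d u v + l*l*inner d v v = inner d (vsub u (vscale l v)) (vsub u (vscale l v))).
   { unfold inner, vsub, vscale.
     transitivity (fsum d (fun j => (u j * u j + (-2*l) * (u j * v j)) + (l*l)*(v j * v j))).
     - rewrite !fsum_plus, !fsum_scal. ring.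
     - apply fsum_ext; intros; ring. }
   rewrite E. apply inner_self_nonneg. }
 unfold norm. rewrite <- sqrt_mult by apply inner_self_nonneg.
 apply Rle_trans with (Rabs (inner d u v)). apply Rle_abs.
 rewrite <- sqrt_Rsqr_abs. apply sqrt_le_1_alt. unfold Rsqr. exact H. Qed.

Lemma norm_scale d s u : norm d (vscale s u) = Rabs s * norm d u.
Proof. unfold norm. rewrite <- sqrt_Rsqr_abs. rewrite <- sqrt_mult by (apply Rle_0_sqr || apply inner_self_nonneg).
 f_equal. unfold inner, vscale, Rsqr. rewrite <- fsum_scal. apply fsum_ext; intros; ring. Qed.
Lemma inner_scale_r d a c u : inner d a (vscale c u) = c * inner d a u.
Proof. unfold inner, vscale. rewrite <- fsum_scal. apply fsum_ext; intros; ring. Qed.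

Lemma phi_deriv d f gradf : has_gradient d f gradf -> forall x u s,
  derivable_pt_lim (fun s => f (vadd x (vscale s u))) s (inner d (gradf (vadd x (vscale s u))) u).
Proof.
 intros Hg x u s eps Heps.
 set (nu := norm d u). assert (Hnu : 0 <= nu) by apply norm_nonneg.
 assert (He' : 0 < eps/2/(nu+1)) by (apply Rdiv_lt_0_compat; lra).
 destruct (Hg (vadd x (vscale s u)) _ He') as [delta [Hd Hy]].
 assert (Hd2 : 0 < delta/(nu+1)) by (apply Rdiv_lt_0_compat; lra).
 exists (mkposreal _ Hd2). intros hh Hh0 Hhd. simpl in Hhd.
 assert (Ev : vsub (vadd x (vscale (s+hh) u)) (vadd x (vscale s u)) = vscale hh u).
 { apply functional_extensionality; intros j. unfold vsub, vadd, vscale. ring. }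
 specialize (Hy (vadd x (vscale (s+hh) u))). rewrite Ev, norm_scale, inner_scale_r in Hy.
 fold nu in Hy.
 assert (Hah : 0 < Rabs hh) by (apply Rabs_pos_lt; auto).
 assert (Hlt : Rabs hh * nu < delta).
 { apply Rle_lt_trans with (Rabs hh * (nu+1)). nra.
   apply Rmult_lt_reg_r with (/(nu+1)). apply Rinv_0_lt_compat; lra.
   rewrite Rmult_assoc, Rinv_r by lra. unfold Rdiv in Hhd. lra. }
 specialize (Hy Hlt).
 set (D := f (vadd x (vscale (s + hh) u)) - f (vadd x (vscale s u))) in *.
 set (I := inner d (gradf (vadd x (vscale s u))) u) in *.
 replace (D/hh - I) with ((D - hh*I)/hh) by (field; auto).
 unfold Rdiv. rewrite Rabs_mult, Rabs_inv.
 apply Rmult_lt_reg_r with (Rabs hh); auto.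
 rewrite Rmult_assoc, Rinv_l by lra.
 apply Rle_lt_trans with (eps / 2 / (nu + 1) * (Rabs hh * nu)). lra.
 assert (nu / (nu+1) < 1). { apply Rmult_lt_reg_r with (nu+1). lra. unfold Rdiv. rewrite Rmult_assoc, Rinv_l by lra. lra. }
 replace (eps / 2 / (nu + 1) * (Rabs hh * nu)) with (eps/2 * Rabs hh * (nu/(nu+1))) by (field; lra).
 assert (0 < eps/2*Rabs hh) by nra. nra.
Qed.

Lemma inner_sub_l d a b u : inner d (vsub a b) u = inner d a u - inner d b u.
Proof. unfold inner, vsub. unfold Rminus. rewrite <- (Rmult_1_l (fsum d (fun j => b j * u j))).
 rewrite Ropp_mult_distr_l, <- fsum_scal, <- fsum_plus. apply fsum_ext; intros; ring. Qed.

Lemma descent d f gradf L : has_gradient d f gradf ->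
  (forall x y, norm d (vsub (gradf x) (gradf y)) <= L * norm d (vsub x y)) ->
  forall x y, f y <= f x + inner d (gradf x) (vsub y x) + L/2 * norm d (vsub y x) ^ 2.
Proof.
 intros Hg HL x y. set (u := vsub y x). set (nu := norm d u).
 assert (Hnu : 0 <= nu) by apply norm_nonneg.
 set (K := inner d (gradf x) u). set (M := L/2*nu^2).
 set (p := fun s => vadd x (vscale s u)).
 set (psi := fun s => f (p s) - (f x + s*K + M*(s*s))).
 set (dpsi := fun s => inner d (gradf (p s)) u - (K + M*(2*s))).
 assert (Hd : forall c, 0 <= c <= 1 -> derivable_pt_lim psi c (dpsi c)).
 { intros c _. apply is_derive_Reals.
   assert (H1 : is_derive (fun s => f (p s)) c (inner d (gradf (p c)) u)).
   { apply is_derive_Reals. apply (phi_deriv d f gradf Hg x u c). }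
   assert (H2 : is_derive (fun s => f x + s*K + M*(s*s)) c (K + M*(2*c))).
   { auto_derive; auto. ring. }
   pose proof (is_derive_minus _ _ _ _ _ H1 H2) as H3.
   exact H3. }
 destruct (MVT_cor2 psi dpsi 0 1 Rlt_0_1 Hd) as [c [Hc Hc01]].
 assert (Hdc : dpsi c <= 0).
 { unfold dpsi. 
   assert (E1 : vsub (p c) x = vscale c u).
   { apply functional_extensionality; intros j. unfold p, vsub, vadd, vscale. ring. }
   pose proof (CS d (vsub (gradf (p c)) (gradf x)) u) as HC.
   rewrite inner_sub_l in HC. fold K nu in HC.
   pose proof (HL (p c) x) as HL1. rewrite E1, norm_scale, Rabs_pos_eq in HL1 by lra. fold nu in HL1.
   assert (norm d (vsub (gradf (p c)) (gradf x)) * nu <= L * (c * nu) * nu) by (apply Rmult_le_compat_r; auto).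
   unfold M. nra. }
 assert (E0 : p 0 = x). { apply functional_extensionality; intros j. unfold p, vadd, vscale. ring. }
 assert (E1 : p 1 = y). { apply functional_extensionality; intros j. unfold p, u, vadd, vscale, vsub. ring. }
 unfold psi in Hc. rewrite E0, E1 in Hc. fold u nu K. fold M.
 assert (dpsi c * (1-0) <= 0) by nra. lra.
Qed.
Lemma zdiff Omega alpha beta g h x1 k w j :
  1 - beta (S k) <> 0 -> 1 - beta (S (S k)) <> 0 ->
  zit Omega alpha beta g h x1 (S (S k)) w j = zit Omega alpha beta g h x1 (S k) w j
   - (vecA Omega alpha beta g h (S k) w j + vecB Omega alpha beta g h (S k) w j + vecC Omega alpha g h (S k) w j).
Proof.
 intros H1 H2. destruct k as [|k].
 - unfold zit, vecA, vecB, vecC, step, ratio, vadd, vscale, vsub, vmul, vzero. simpl.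
   unfold step, vsub, vmul, vzero. simpl mom. unfold vzero. field; repeat split; auto.
 - unfold zit, vecA, vecB, vecC, ratio, vadd, vscale, vsub, vmul. 
   replace (S (S (S k)) - 1)%nat with (S (S k)) by lia.
   replace (S (S k) - 1)%nat with (S k) by lia. simpl xit.
   change (xseq Omega alpha beta g h x1 (S (S k)) w) with (vsub (xseq Omega alpha beta g h x1 (S k) w) (step Omega alpha beta g h (S (S k)) w)).
   change (xseq Omega alpha beta g h x1 (S k) w) with (vsub (xseq Omega alpha beta g h x1 k w) (step Omega alpha beta g h (S k) w)).
   unfold step, vsub, vmul. simpl mom. field; repeat split; auto.
Qed.

Lemma sq3 d a b c : norm d (fun j => a j + b j + c j) ^ 2 <= 3 * (norm d a ^ 2 + norm d b ^ 2 + norm d c ^ 2).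
Proof. rewrite !norm_sq. unfold inner. rewrite <- !fsum_plus, <- fsum_scal. apply fsum_le; intros. pose proof (pow2_ge_0 (a j - b j)); pose proof (pow2_ge_0 (b j - c j)); pose proof (pow2_ge_0 (a j - c j)). nra. Qed.

Lemma L_nonneg d L gradf : (forall x y, norm d (vsub (gradf x) (gradf y)) <= L * norm d (vsub x y)) ->
  d = 0%nat \/ 0 <= L.
Proof. intros HL. destruct d as [|d]; [left; auto|right].
 specialize (HL (vconst 1) vzero). pose proof (norm_nonneg (S d) (vsub (gradf (vconst 1)) (gradf vzero))).
 assert (0 < norm (S d) (vsub (vconst 1) vzero)).
 { unfold norm. apply sqrt_lt_R0. unfold inner. simpl. 
   assert (0 <= fsum d (fun j => vsub (vconst 1) vzero j * vsub (vconst 1) vzero j)).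
   { pose proof (inner_self_nonneg d (vsub (vconst 1) vzero)). exact H0. }
   unfold vsub, vconst, vzero in *. lra. }
 nra. Qed.
Theorem lemma2
  (d : nat) (Omega : Type) (P : expectation Omega)
  (f : vec -> R) (gradf : vec -> vec) (L H G beta1 : R) (xstar : vec)
  (alpha beta : nat -> R) (g : nat -> Omega -> vec)
  (h : nat -> (nat -> vec) -> vec) (x1 : vec)
  (* (A1) *)
  (Hf_Rd : on_Rd d f)
  (Hgrad : has_gradient d f gradf)
  (HLip : forall x y, norm d (vsub (gradf x) (gradf y)) <= L * norm d (vsub x y))
  (Hmin : forall x, f xstar <= f x)
  (* (A2) *)
  (HgradH : forall x, norm d (gradf x) <= H)
  (HgH : forall t w, (1 <= t)%nat -> norm d (g t w) <= H)
  (* (A3): the noise zeta_t = g_t - grad f(x_t) has zero mean conditionally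
     on g_1, ..., g_{t-1} *)
  (Hnoise : forall (t j : nat) (phi : (nat -> vec) -> R),
      (1 <= t)%nat -> (j < d)%nat ->
      (exists B, forall Gs, Rabs (phi Gs) <= B) ->
      (forall Gs Gs', (forall i, (1 <= i)%nat -> (i < t)%nat -> Gs i = Gs' i) ->
                      phi Gs = phi Gs') ->
      integrable P (fun w => (g t w j - gradf (xit Omega alpha beta g h x1 t w) j)
                              * phi (fun i => g i w)) ->
      E P (fun w => (g t w j - gradf (xit Omega alpha beta g h x1 t w) j)
                     * phi (fun i => g i w)) = 0)
  (* generalized Adam: stepsizes, maps h_t *)
  (Halpha : forall t, (1 <= t)%nat -> 0 < alpha t)
  (Hh_causal : forall t Gs Gs', (forall i, (1 <= i)%nat -> (i <= t)%nat -> Gs i = Gs' i) ->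
                  h t Gs = h t Gs')
  (Hh_pos : forall t Gs j, (1 <= t)%nat -> (j < d)%nat -> 0 < h t Gs j)
  (* (SH) *)
  (Hbeta1 : 0 <= beta1 < 1)
  (Hbeta_range : forall t, (1 <= t)%nat -> 0 <= beta t < 1)
  (Hbeta_le : forall t, (1 <= t)%nat -> beta t <= beta1)
  (Hbeta_noninc : forall t, (1 <= t)%nat -> beta (S t) <= beta t)
  (HGpos : 0 < G)
  (HG : forall t w, (1 <= t)%nat -> norm d (step Omega alpha beta g h t w) <= G)
  (t : nat) (Ht : (1 <= t)%nat)
  (* the expectations occurring in the statement exist *)
  (Hint0 : integrable P (fun w => f (zit Omega alpha beta g h x1 (S t) w)
                                  - f (zit Omega alpha beta g h x1 1 w)))
  (Hint1 : integrable P (T1_rv Omega alpha beta g h x1 d gradf t))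
  (Hint2 : integrable P (T2_rv Omega alpha beta g h x1 d gradf t))
  (Hint3 : integrable P (T3_rv Omega alpha beta g h x1 d gradf t))
  (Hint4 : integrable P (T4_rv Omega alpha beta g h d L t))
  (Hint5 : integrable P (T5_rv Omega alpha beta g h d L t))
  (Hint6 : integrable P (T6_rv Omega alpha g h d L t)) :
  E P (fun w => f (zit Omega alpha beta g h x1 (S t) w) - f (zit Omega alpha beta g h x1 1 w))
  <= E P (T1_rv Omega alpha beta g h x1 d gradf t) + E P (T2_rv Omega alpha beta g h x1 d gradf t)
   + E P (T3_rv Omega alpha beta g h x1 d gradf t) + E P (T4_rv Omega alpha beta g h d L t)
   + E P (T5_rv Omega alpha beta g h d L t) + E P (T6_rv Omega alpha g h d L t).

Proof.
 set (z := zit Omega alpha beta g h x1).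
 set (A := vecA Omega alpha beta g h). set (B := vecB Omega alpha beta g h).
 set (C := vecC Omega alpha g h).
 assert (Hb : forall k, 1 - beta (S k) <> 0).
 { intros k. destruct (Hbeta_range (S k)); lia || lra. }
 assert (HLd := L_nonneg d L gradf HLip).
 assert (Hstep : forall k w,
   f (z (S (S k)) w) - f (z (S k) w) <=
     - inner d (gradf (z (S k) w)) (A (S k) w)
     - alpha (S k) * inner d (gradf (z (S k) w)) (vdiv (g (S k) w) (vsqrt (vhat Omega g h (S k) w)))
     - inner d (gradf (z (S k) w)) (B (S k) w)
     + 3/2*L*norm d (B (S k) w) ^ 2 + 3/2*L*norm d (A (S k) w) ^ 2 + 3/2*L*norm d (C (S k) w) ^ 2).
 { intros k w.
   pose proof (descent d f gradf L Hgrad HLip (z (S k) w) (z (S (S k)) w)) as HD.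
   assert (Ev : vsub (z (S (S k)) w) (z (S k) w) = vscale (-1) (fun j => A (S k) w j + B (S k) w j + C (S k) w j)).
   { apply functional_extensionality; intros j. unfold vsub, vscale, z, A, B, C.
     rewrite zdiff by auto. ring. }
   rewrite Ev, inner_scale_r, norm_scale in HD.
   assert (Ei : inner d (gradf (z (S k) w)) (fun j => A (S k) w j + B (S k) w j + C (S k) w j)
      = inner d (gradf (z (S k) w)) (A (S k) w) + inner d (gradf (z (S k) w)) (B (S k) w)
        + alpha (S k) * inner d (gradf (z (S k) w)) (vdiv (g (S k) w) (vsqrt (vhat Omega g h (S k) w)))).
   { unfold inner. rewrite <- fsum_scal, <- !fsum_plus. apply fsum_ext; intros j _.
     unfold C, vecC, eta, vmul, vdiv, vconst. unfold Rdiv. ring. }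
   rewrite Ei in HD.
   pose proof (sq3 d (A (S k) w) (B (S k) w) (C (S k) w)) as H3.
   replace (Rabs (-1)) with 1 in HD by (unfold Rabs; destruct Rcase_abs; lra). rewrite Rmult_1_l in HD.
   destruct HLd as [Hd0|HL0].
   - subst d. unfold norm, inner in *. simpl in *. rewrite sqrt_0 in *. lra.
   - assert (L/2 * norm d (fun j => A (S k) w j + B (S k) w j + C (S k) w j) ^ 2 <=
             L/2 * (3 * (norm d (A (S k) w) ^ 2 + norm d (B (S k) w) ^ 2 + norm d (C (S k) w) ^ 2))).
     { apply Rmult_le_compat_l; lra. }
     lra. }
 assert (Hpath : forall t w, f (z (S t) w) - f (z 1%nat w) <=
    T1_rv Omega alpha beta g h x1 d gradf t w + T2_rv Omega alpha beta g h x1 d gradf t w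
  + T3_rv Omega alpha beta g h x1 d gradf t w + T4_rv Omega alpha beta g h d L t w
  + T5_rv Omega alpha beta g h d L t w + T6_rv Omega alpha g h d L t w).
 { intros t0 w. induction t0 as [|k IH].
   - unfold T1_rv, T2_rv, T3_rv, T4_rv, T5_rv, T6_rv. simpl. lra.
   - unfold T1_rv, T2_rv, T3_rv, T4_rv, T5_rv, T6_rv in *. simpl fsum.
     specialize (Hstep k w). fold z A B C. cbv beta in *. simpl pow in *. fold z A B C in IH. lra. }
 clear Hstep.
 set (X1 := T1_rv Omega alpha beta g h x1 d gradf t) in *.
 set (X2 := T2_rv Omega alpha beta g h x1 d gradf t) in *.
 set (X3 := T3_rv Omega alpha beta g h x1 d gradf t) in *.
 set (X4 := T4_rv Omega alpha beta g h d L t) in *.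
 set (X5 := T5_rv Omega alpha beta g h d L t) in *.
 set (X6 := T6_rv Omega alpha g h d L t) in *.
 assert (I12 := integrable_plus _ P X1 X2 Hint1 Hint2).
 assert (I123 := integrable_plus _ P _ X3 I12 Hint3).
 assert (I4 := integrable_plus _ P _ X4 I123 Hint4).
 assert (I5 := integrable_plus _ P _ X5 I4 Hint5).
 assert (I6 := integrable_plus _ P _ X6 I5 Hint6).
 apply Rle_trans with (E P (fun w => X1 w + X2 w + X3 w + X4 w + X5 w + X6 w)).
 - apply (E_mono _ P); [exact Hint0 | exact I6 | intros w; apply (Hpath t w)].
 - rewrite (E_plus _ P _ X6 I5 Hint6). rewrite (E_plus _ P _ X5 I4 Hint5).
   rewrite (E_plus _ P _ X4 I123 Hint4). rewrite (E_plus _ P _ X3 I12 Hint3).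
   rewrite (E_plus _ P X1 X2 Hint1 Hint2). lra.
Qed.
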